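(* In the two-state model with $\delta(t)=\tfrac12e^{-t}+\tfrac12e^{-2t}$, $g_1(a)=-a^2$, and $g_2(b)=\frac{193}{144}+\frac56b$ for $b<\frac7{12}$, $g_2(b)=2-(1-b)^2$ for $b\ge\frac7{12}$: (i) $Q^*\sim(5/12,7/12)$ is a weak equilibrium but not a strong equilibrium; indeed, for every $b\in[0,7/12)$ and $Q\sim(5/12,b)$, one has $F(2,Q^* )<F(2,Q\otimes_\varepsilon Q^* )$ for all sufficiently small $\varepsilon>0$. (ii) The equation $2a=\frac12\big(\frac1{1+a}+\frac1{2+a}\big)\big(a^2+\frac{193}{144}\big)$ has a unique solution $\bar a\in[0,\infty)$, it satisfies $2\bar a\ge\frac56$, and $\bar Q^*\sim(\bar a,0)$ is a strong equilibrium.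
   Context: Two-state model: $S=\{1,2\}$, admissible rows unrestricted ($D_i=E_i$), so every admissible generator has the form $Q=\begin{pmatrix}-a&a\\ b&-b\end{pmatrix}$ with $a,b\ge0$, written $Q\sim(a,b)$. The payoff is $f(t,1,(-a,a))=\delta(t)g_1(a)$ and $f(t,2,(b,-b))=\delta(t)g_2(b)$. $X$ is a continuous-time Markov chain with generator $Q$; $F(i,Q)=\mathbb E_{i,Q}[\int_0^\infty f(t,X_t,Q_{X_t})dt]$. $Q\otimes_\varepsilon Q'$: generator $Q$ on $[0,\varepsilon]$, then $Q'$ on $(\varepsilon,\infty)$, with expected payoff $F(i,Q\otimes_\varepsilon Q')$. $Q^*$ is a weak equilibrium if $\liminf_{\varepsilon\downarrow0}\varepsilon^{-1}(F(i,Q^* )-F(i,Q\otimes_\varepsilon Q^* ))\ge0$ for all admissible $Q$ and $i\in S$; a strong equilibrium if for every $i,Q$ there is $\varepsilon>0$ with $F(i,Q^* )\ge F(i,Q\otimes_{\varepsilon'}Q^* )$ for all $0<\varepsilon'\le\varepsilon$. *)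

(* Defs.v *)
From Stdlib Require Import Reals Lra ClassicalEpsilon.
Open Scope R_scope.

Inductive state := st1 | st2.

(* Admissible generator Q ~ (a,b):  Q = [[-a, a],[b, -b]],  a,b >= 0. *)
Record gen := mkGen { ga : R; gb : R }.
Definition admissible (Q : gen) : Prop := 0 <= ga Q /\ 0 <= gb Q.

(* Transition probabilities P_{ij}(t) = (exp (t Q))_{ij} of the
   time-homogeneous chain with generator Q ~ (a,b), written in closed form
   (s = a + b; if s = 0 the chain is constant). *)
Definition trans (Q : gen) (i j : state) (t : R) : R :=
  let a := ga Q in let b := gb Q in let s := a + b in
  if Req_EM_T s 0 then
    match i, j with st1, st1 => 1 | st2, st2 => 1 | _, _ => 0 end
  else
    match i, j with
    | st1, st1 => b / s + a / s * exp (- (s * t))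
    | st1, st2 => a / s - a / s * exp (- (s * t))
    | st2, st2 => a / s + b / s * exp (- (s * t))
    | st2, st1 => b / s - b / s * exp (- (s * t))
    end.

Definition payoff (delta g1 g2 : R -> R) (Q : gen) (j : state) (t : R) : R :=
  match j with
  | st1 => delta t * g1 (ga Q)
  | st2 => delta t * g2 (gb Q)
  end.

Definition has_integral (f : R -> R) (a b v : R) : Prop :=
  exists pr : Riemann_integrable f a b, RiemannInt pr = v.

Definition has_improper_integral (f : R -> R) (a v : R) : Prop :=
  forall eta, 0 < eta -> exists M, forall T, M <= T -> a <= T ->
    exists pr : Riemann_integrable f a T, Rabs (RiemannInt pr - v) < eta.

Definition integral (f : R -> R) (a b : R) : R :=
  epsilon (inhabits 0) (fun v => has_integral f a b v).

Definition improper_integral (f : R -> R) (a : R) : R :=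
  epsilon (inhabits 0) (fun v => has_improper_integral f a v).

(* F(i,Q) = E_{i,Q}[ int_0^infty f(t, X_t, Q_{X_t}) dt ]
          = int_0^infty sum_j P_{ij}(t) f(t, j, Q_j) dt *)
Definition F (delta g1 g2 : R -> R) (i : state) (Q : gen) : R :=
  improper_integral
    (fun t => trans Q i st1 t * payoff delta g1 g2 Q st1 t
            + trans Q i st2 t * payoff delta g1 g2 Q st2 t) 0.

(* F(i, Q (x)_eps Q2): generator Q on [0,eps], then Q2 on (eps,infty). *)
Definition Fconcat (delta g1 g2 : R -> R) (i : state) (Q : gen) (eps : R)
    (Q' : gen) : R :=
  integral
    (fun t => trans Q i st1 t * payoff delta g1 g2 Q st1 t
            + trans Q i st2 t * payoff delta g1 g2 Q st2 t) 0 eps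
  + improper_integral
    (fun t => (trans Q i st1 eps * trans Q' st1 st1 (t - eps)
               + trans Q i st2 eps * trans Q' st2 st1 (t - eps))
              * payoff delta g1 g2 Q' st1 t
            + (trans Q i st1 eps * trans Q' st1 st2 (t - eps)
               + trans Q i st2 eps * trans Q' st2 st2 (t - eps))
              * payoff delta g1 g2 Q' st2 t) eps.

Definition weak_equilibrium (delta g1 g2 : R -> R) (Qs : gen) : Prop :=
  admissible Qs /\
  forall (Q : gen) (i : state), admissible Q ->
    forall eta, 0 < eta -> exists e0, 0 < e0 /\ forall eps, 0 < eps < e0 ->
      (F delta g1 g2 i Qs - Fconcat delta g1 g2 i Q eps Qs) / eps >= - eta.

Definition strong_equilibrium (delta g1 g2 : R -> R) (Qs : gen) : Prop :=
  admissible Qs /\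
  forall (Q : gen) (i : state), admissible Q ->
    exists e, 0 < e /\ forall e', 0 < e' <= e ->
      F delta g1 g2 i Qs >= Fconcat delta g1 g2 i Q e' Qs.

Definition delta13 (t : R) : R := / 2 * exp (- t) + / 2 * exp (- (2 * t)).
Definition g1_13 (a : R) : R := - a ^ 2.
Definition g2_13 (b : R) : R :=
  if Rlt_dec b (7 / 12) then 193 / 144 + 5 / 6 * b else 2 - (1 - b) ^ 2.

(* Main.v *)
Require Import Defs.
From Stdlib Require Import Reals Lra ClassicalEpsilon FunctionalExtensionality.
From Coquelicot Require Import Coquelicot.
Open Scope R_scope.

Lemma integral_eq (h : R -> R) a b :
  (forall z, continuous h z) -> integral h a b = RInt h a b.
Proof.
  intros Hc.
  assert (Hex : ex_RInt h a b) by (apply (@ex_RInt_continuous R_CompleteNormedModule); intros; apply Hc).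
  assert (HH : has_integral h a b (RInt h a b)).
  { exists (ex_RInt_Reals_0 _ _ _ Hex). symmetry. apply RInt_Reals. }
  unfold integral.
  destruct (epsilon_spec (inhabits 0) (fun v => has_integral h a b v) (ex_intro _ _ HH)) as [pr Hpr].
  rewrite <- Hpr. symmetry. apply RInt_Reals.
Qed.

Lemma improper_unique f a v w :
  has_improper_integral f a v -> has_improper_integral f a w -> v = w.
Proof.
  intros Hv Hw. destruct (Req_dec v w) as [|Hne]; [assumption|exfalso].
  assert (He : 0 < Rabs (v - w) / 2).
  { assert (0 < Rabs (v - w)) by (apply Rabs_pos_lt; lra). lra. }
  destruct (Hv _ He) as [M1 HM1]. destruct (Hw _ He) as [M2 HM2].
  set (T := Rmax (Rmax M1 M2) a).
  assert (h1 : M1 <= T) by (unfold T; eapply Rle_trans; [apply Rmax_l|apply Rmax_l]).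
  assert (h2 : M2 <= T) by (unfold T; eapply Rle_trans; [apply Rmax_r|apply Rmax_l]).
  assert (h3 : a <= T) by (unfold T; apply Rmax_r).
  destruct (HM1 T h1 h3) as [p1 H1]. destruct (HM2 T h2 h3) as [p2 H2].
  rewrite (RiemannInt_P5 p1 p2) in H1.
  assert (Rabs (v - w) <= Rabs (RiemannInt p2 - v) + Rabs (RiemannInt p2 - w)).
  { replace (v - w) with (-(RiemannInt p2 - v) + (RiemannInt p2 - w)) by ring.
    eapply Rle_trans; [apply Rabs_triang|]. rewrite Rabs_Ropp. lra. }
  lra.
Qed.

Lemma improper_eq (f Fa : R -> R) a L :
  (forall t, is_derive Fa t (f t)) -> (forall t, continuous f t) ->
  (forall eta, 0 < eta -> exists M, forall T, M <= T -> Rabs (Fa T - L) < eta) ->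
  improper_integral f a = L - Fa a.
Proof.
  intros Hd Hc Hl.
  assert (HH : has_improper_integral f a (L - Fa a)).
  { intros eta Heta. destruct (Hl eta Heta) as [M HM]. exists M. intros T HT HaT.
    assert (Hex : ex_RInt f a T) by (apply (@ex_RInt_continuous R_CompleteNormedModule); intros; apply Hc).
    exists (ex_RInt_Reals_0 _ _ _ Hex). rewrite <- RInt_Reals.
    assert (E : RInt f a T = Fa T - Fa a).
    { apply is_RInt_unique. apply (@is_RInt_derive R_CompleteNormedModule Fa f); intros; [apply Hd|apply Hc]. }
    rewrite E. replace (Fa T - Fa a - (L - Fa a)) with (Fa T - L) by ring. auto. }
  unfold improper_integral.
  apply (improper_unique f a).
  - apply (epsilon_spec (inhabits 0) (fun v => has_improper_integral f a v) (ex_intro _ _ HH)).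
  - exact HH.
Qed.

Lemma exp_decay K eta : 0 <= K -> 0 < eta -> exists M, forall T, M <= T -> K * exp (- T) < eta.
Proof.
  intros HK He. exists (ln ((K + 1) / eta)). intros T HT.
  assert (H1 : exp (- T) <= eta / (K + 1)).
  { replace (eta / (K+1)) with (exp (- ln ((K+1)/eta))).
    - destruct (Req_dec T (ln ((K + 1) / eta))) as [->|]; [lra|].
      left. apply exp_increasing. lra.
    - rewrite exp_Ropp, exp_ln. field. split; lra. apply Rdiv_lt_0_compat; lra. }
  assert (0 < exp (-T)) by apply exp_pos.
  apply Rle_lt_trans with (K * (eta / (K+1))).
  - apply Rmult_le_compat_l; lra.
  - apply Rmult_lt_reg_r with (K+1); [lra|]. field_simplify; [|lra]. nra.
Qed.

Lemma cont_lt (f : R -> R) x0 eta : continuous f x0 -> 0 < eta ->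
  exists e, 0 < e /\ forall x, Rabs (x - x0) < e -> f x < f x0 + eta.
Proof.
  intros Hc He. apply continuity_pt_filterlim in Hc.
  destruct (Hc eta He) as [alp [Ha Hx]]. exists alp. split; auto.
  intros x Hxx. destruct (Req_dec x x0) as [->|Hn]; [lra|].
  assert (R_dist (f x) (f x0) < eta).
  { apply Hx. split. split. exact I. auto. exact Hxx. }
  unfold R_dist in H. apply Rabs_def2 in H. lra.
Qed.

Definition Bs e := / 2 * exp (- e) + / 4 * exp (- (2 * e)).
Definition Dk S e := / 2 * exp (- e) / (1 + S) + / 2 * exp (- (2 * e)) / (2 + S).
Definition Ck (A B : R) (k : state) : R :=
  match k with st1 => - (A / (A + B)) | st2 => B / (A + B) end.
Definition Wv (G1 G2 A B : R) (k : state) (e : R) : R :=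
  (B * G1 + A * G2) / (A + B) * Bs e + Ck A B k * (G2 - G1) * Dk (A + B) e.
Definition Rk (G1 G2 A B : R) (k : state) (eps t : R) : R :=
  - ((B * G1 + A * G2) / (A + B) * Bs t)
  - Ck A B k * (G2 - G1) * exp (- ((A + B) * (t - eps))) * Dk (A + B) t.

Lemma exp_mono2 T : 0 <= T -> exp (- (2 * T)) <= exp (- T).
Proof. intros. destruct (Req_dec T 0) as [->|]. right; f_equal; ring. left; apply exp_increasing; lra. Qed.

Lemma Rk_bound G1 G2 A B k eps T : 0 < A + B -> 0 <= T -> eps <= T ->
  Rabs (Rk G1 G2 A B k eps T) <=
  (Rabs ((B * G1 + A * G2) / (A + B)) + Rabs (Ck A B k * (G2 - G1))) * exp (- T).
Proof.
  intros HS HT He. unfold Rk.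
  set (p := (B * G1 + A * G2) / (A + B)). set (c := Ck A B k * (G2 - G1)).
  set (E := exp (- ((A + B) * (T - eps)))).
  assert (HE0 : 0 < E) by apply exp_pos.
  assert (HE1 : E <= 1).
  { unfold E. rewrite <- exp_0. destruct (Req_dec T eps) as [->|].
    right. f_equal. ring. left. apply exp_increasing. nra. }
  assert (H2 := exp_mono2 T HT). assert (Hx : 0 < exp (- T)) by apply exp_pos.
  assert (Hy : 0 < exp (- (2*T))) by apply exp_pos.
  assert (HB : 0 <= Bs T <= exp (- T)) by (unfold Bs; split; lra).
  assert (HD : 0 <= Dk (A + B) T <= exp (- T)).
  { unfold Dk. assert (/ (1 + (A+B)) <= 1). { rewrite <- Rinv_1. apply Rinv_le_contravar; lra. }
    assert (/ (2 + (A+B)) <= 1). { rewrite <- Rinv_1. apply Rinv_le_contravar; lra. }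
    assert (0 < / (1 + (A+B))) by (apply Rinv_0_lt_compat; lra).
    assert (0 < / (2 + (A+B))) by (apply Rinv_0_lt_compat; lra).
    unfold Rdiv. split; nra. }
  replace (- (p * Bs T) - c * E * Dk (A + B) T) with (- (p * Bs T) + - (c * (E * Dk (A + B) T))) by ring.
  eapply Rle_trans; [apply Rabs_triang|]. rewrite !Rabs_Ropp, !Rabs_mult.
  rewrite (Rabs_pos_eq (Bs T)) by lra. rewrite (Rabs_pos_eq E) by lra. rewrite (Rabs_pos_eq (Dk _ _)) by lra.
  assert (0 <= Rabs p) by apply Rabs_pos. assert (0 <= Rabs c) by apply Rabs_pos.
  assert (E * Dk (A + B) T <= exp (- T)) by nra.
  nra.
Qed.

Lemma tail (g1 g2 : R -> R) A B x1 x2 eps : 0 < A + B ->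
  improper_integral (fun t =>
    (x1 * trans (mkGen A B) st1 st1 (t - eps) + x2 * trans (mkGen A B) st2 st1 (t - eps))
      * payoff delta13 g1 g2 (mkGen A B) st1 t
  + (x1 * trans (mkGen A B) st1 st2 (t - eps) + x2 * trans (mkGen A B) st2 st2 (t - eps))
      * payoff delta13 g1 g2 (mkGen A B) st2 t) eps
  = x1 * Wv (g1 A) (g2 B) A B st1 eps + x2 * Wv (g1 A) (g2 B) A B st2 eps.
Proof.
  intros HS. set (G1 := g1 A). set (G2 := g2 B).
  set (f := fun t => _).
  assert (Hf : f = fun t =>
     x1 * ((/ 2 * exp (- t) + / 2 * exp (- (2 * t))) *
             ((B * G1 + A * G2) / (A + B) + Ck A B st1 * (G2 - G1) * exp (- ((A + B) * (t - eps)))))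
   + x2 * ((/ 2 * exp (- t) + / 2 * exp (- (2 * t))) *
             ((B * G1 + A * G2) / (A + B) + Ck A B st2 * (G2 - G1) * exp (- ((A + B) * (t - eps)))))).
  { unfold f. apply functional_extensionality. intro t.
    unfold trans, payoff, delta13, Ck; simpl.
    destruct (Req_EM_T (A + B) 0) as [e|n]; [lra|]. fold G1 G2. field. lra. }
  rewrite Hf; clear Hf f.
  rewrite (improper_eq _ (fun t => x1 * Rk G1 G2 A B st1 eps t + x2 * Rk G1 G2 A B st2 eps t) eps 0).
  - unfold Rk, Wv. replace (eps - eps) with 0 by ring. rewrite Rmult_0_r, Ropp_0, exp_0. ring.
  - intro t. unfold Rk, Bs, Dk, Ck. auto_derive. easy. cbv beta iota. replace (t + - eps) with (t - eps) by ring. field. repeat split; lra.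
  - intro t. apply (@ex_derive_continuous R_AbsRing R_NormedModule). auto_derive. easy.
  - intros eta Heta.
    set (K := Rabs x1 * (Rabs ((B * G1 + A * G2) / (A + B)) + Rabs (Ck A B st1 * (G2 - G1)))
            + Rabs x2 * (Rabs ((B * G1 + A * G2) / (A + B)) + Rabs (Ck A B st2 * (G2 - G1)))).
    assert (HK : 0 <= K).
    { unfold K. pose proof (Rabs_pos x1). pose proof (Rabs_pos x2).
      pose proof (Rabs_pos ((B * G1 + A * G2) / (A + B))).
      pose proof (Rabs_pos (Ck A B st1 * (G2 - G1))). pose proof (Rabs_pos (Ck A B st2 * (G2 - G1))). nra. }
    destruct (exp_decay K eta HK Heta) as [M HM].
    exists (Rmax M (Rmax eps 0)). intros T HT.
    assert (h1 : M <= T) by (eapply Rle_trans; [apply Rmax_l|exact HT]).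
    assert (h2 : eps <= T) by (eapply Rle_trans; [|exact HT]; eapply Rle_trans; [apply Rmax_l|apply Rmax_r]).
    assert (h3 : 0 <= T) by (eapply Rle_trans; [|exact HT]; eapply Rle_trans; [apply Rmax_r|apply Rmax_r]).
    specialize (HM T h1). rewrite Rminus_0_r.
    eapply Rle_lt_trans; [|exact HM].
    eapply Rle_trans; [apply Rabs_triang|]. rewrite !Rabs_mult.
    pose proof (Rk_bound G1 G2 A B st1 eps T HS h3 h2).
    pose proof (Rk_bound G1 G2 A B st2 eps T HS h3 h2).
    pose proof (Rabs_pos x1). pose proof (Rabs_pos x2).
    unfold K. nra.
Qed.

Definition hf (g1 g2 : R -> R) (Q : gen) (i : state) (t : R) : R :=
  trans Q i st1 t * payoff delta13 g1 g2 Q st1 t + trans Q i st2 t * payoff delta13 g1 g2 Q st2 t.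

Definition Qm (Q : gen) (k j : state) : R :=
  match k, j with
  | st1, st1 => - ga Q | st1, st2 => ga Q | st2, st1 => gb Q | st2, st2 => - gb Q end.

Lemma trans_derive Q i j t : admissible Q ->
  is_derive (trans Q i j) t (trans Q i st1 t * Qm Q st1 j + trans Q i st2 t * Qm Q st2 j).
Proof.
  destruct Q as [a b]. unfold admissible. simpl. intros [Ha Hb].
  unfold trans, Qm. simpl.
  destruct (Req_EM_T (a + b) 0) as [e|n].
  - assert (a = 0) by lra. assert (b = 0) by lra. subst.
    destruct i, j; simpl; auto_derive; try easy; ring.
  - destruct i, j; simpl; auto_derive; try easy; field; lra.
Qed.

Lemma trans_ex_derive Q i j t : admissible Q -> ex_derive (trans Q i j) t.
Proof. intros. eexists. apply trans_derive. auto. Qed.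

Lemma hf_cont g1 g2 Q i t : admissible Q -> continuous (hf g1 g2 Q i) t.
Proof.
  intros HQ. apply (@ex_derive_continuous R_AbsRing R_NormedModule).
  unfold hf, payoff, delta13. auto_derive. repeat split; apply trans_ex_derive; auto.
Qed.

Lemma Wv_derive G1 G2 A B k e : 0 < A + B ->
  is_derive (Wv G1 G2 A B k) e
   (match k with
    | st1 => - (delta13 e * G1) - A * (Wv G1 G2 A B st2 e - Wv G1 G2 A B st1 e)
    | st2 => - (delta13 e * G2) - B * (Wv G1 G2 A B st1 e - Wv G1 G2 A B st2 e) end).
Proof.
  intros HS. destruct k; unfold Wv, Bs, Dk, Ck, delta13; auto_derive; try easy;
  field; repeat split; lra.
Qed.

Lemma F_eq g1 g2 A B i : 0 < A + B ->
  F delta13 g1 g2 i (mkGen A B) = Wv (g1 A) (g2 B) A B i 0.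
Proof.
  intros HS. unfold F.
  destruct i.
  - assert (E : (fun t => trans (mkGen A B) st1 st1 t * payoff delta13 g1 g2 (mkGen A B) st1 t
       + trans (mkGen A B) st1 st2 t * payoff delta13 g1 g2 (mkGen A B) st2 t) = (fun t =>
      (1 * trans (mkGen A B) st1 st1 (t - 0) + 0 * trans (mkGen A B) st2 st1 (t - 0))
        * payoff delta13 g1 g2 (mkGen A B) st1 t
    + (1 * trans (mkGen A B) st1 st2 (t - 0) + 0 * trans (mkGen A B) st2 st2 (t - 0))
        * payoff delta13 g1 g2 (mkGen A B) st2 t)).
    { apply functional_extensionality. intro t. rewrite Rminus_0_r. ring. }
    rewrite E. rewrite tail by auto. simpl. ring.
  - assert (E : (fun t => trans (mkGen A B) st2 st1 t * payoff delta13 g1 g2 (mkGen A B) st1 t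
       + trans (mkGen A B) st2 st2 t * payoff delta13 g1 g2 (mkGen A B) st2 t) = (fun t =>
      (0 * trans (mkGen A B) st1 st1 (t - 0) + 1 * trans (mkGen A B) st2 st1 (t - 0))
        * payoff delta13 g1 g2 (mkGen A B) st1 t
    + (0 * trans (mkGen A B) st1 st2 (t - 0) + 1 * trans (mkGen A B) st2 st2 (t - 0))
        * payoff delta13 g1 g2 (mkGen A B) st2 t)).
    { apply functional_extensionality. intro t. rewrite Rminus_0_r. ring. }
    rewrite E. rewrite tail by auto. simpl. ring.
Qed.

Definition Psi (g1 g2 : R -> R) (Q : gen) (i : state) (A B : R) (e : R) : R :=
  RInt (hf g1 g2 Q i) 0 e
  + trans Q i st1 e * Wv (g1 A) (g2 B) A B st1 e
  + trans Q i st2 e * Wv (g1 A) (g2 B) A B st2 e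
  - Wv (g1 A) (g2 B) A B i 0.

Lemma Fconcat_eq g1 g2 Q i A B e : admissible Q -> 0 < A + B ->
  Fconcat delta13 g1 g2 i Q e (mkGen A B) - F delta13 g1 g2 i (mkGen A B) = Psi g1 g2 Q i A B e.
Proof.
  intros HQ HS. unfold Fconcat. rewrite tail by auto. rewrite F_eq by auto.
  unfold Psi. rewrite integral_eq.
  - unfold hf. simpl. ring.
  - intro z. apply (hf_cont g1 g2 Q i z HQ).
Qed.

Lemma RInt_derive_hf g1 g2 Q i e : admissible Q ->
  is_derive (fun x => RInt (hf g1 g2 Q i) 0 x) e (hf g1 g2 Q i e).
Proof.
  intros HQ. apply (@is_derive_RInt R_CompleteNormedModule (hf g1 g2 Q i) (fun x => RInt (hf g1 g2 Q i) 0 x) 0).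
  - apply filter_forall. intro x. apply (@RInt_correct R_CompleteNormedModule).
    apply (@ex_RInt_continuous R_CompleteNormedModule). intros. apply hf_cont; auto.
  - apply hf_cont; auto.
Qed.

Definition v1 g1 g2 Q A B e :=
  delta13 e * (g1 (ga Q) - g1 A) + (ga Q - A) * (Wv (g1 A) (g2 B) A B st2 e - Wv (g1 A) (g2 B) A B st1 e).
Definition v2 g1 g2 Q A B e :=
  delta13 e * (g2 (gb Q) - g2 B) - (gb Q - B) * (Wv (g1 A) (g2 B) A B st2 e - Wv (g1 A) (g2 B) A B st1 e).

Lemma Psi_derive g1 g2 Q i A B e : admissible Q -> 0 < A + B ->
  is_derive (Psi g1 g2 Q i A B) e
    (trans Q i st1 e * v1 g1 g2 Q A B e + trans Q i st2 e * v2 g1 g2 Q A B e).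
Proof.
  intros HQ HS. unfold Psi.
  set (I := fun x => RInt (hf g1 g2 Q i) 0 x).
  set (W1 := Wv (g1 A) (g2 B) A B st1). set (W2 := Wv (g1 A) (g2 B) A B st2).
  set (c := Wv (g1 A) (g2 B) A B i 0).
  set (P1 := trans Q i st1). set (P2 := trans Q i st2).
  assert (HI := RInt_derive_hf g1 g2 Q i e HQ). fold I in HI.
  assert (H1 := trans_derive Q i st1 e HQ). fold P1 in H1.
  assert (H2 := trans_derive Q i st2 e HQ). fold P2 in H2.
  assert (HW1 := Wv_derive (g1 A) (g2 B) A B st1 e HS). fold W1 W2 in HW1.
  assert (HW2 := Wv_derive (g1 A) (g2 B) A B st2 e HS). fold W1 W2 in HW2.
  auto_derive.
  - repeat split; eexists; eauto.
  - replace (Derive (fun x => I x) e) with (hf g1 g2 Q i e) by (symmetry; apply is_derive_unique; exact HI).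
    replace (Derive (fun x => P1 x) e) with (P1 e * Qm Q st1 st1 + trans Q i st2 e * Qm Q st2 st1)
      by (symmetry; apply is_derive_unique; exact H1).
    replace (Derive (fun x => P2 x) e) with (trans Q i st1 e * Qm Q st1 st2 + P2 e * Qm Q st2 st2)
      by (symmetry; apply is_derive_unique; exact H2).
    replace (Derive (fun x => W1 x) e) with (- (delta13 e * g1 A) - A * (W2 e - W1 e))
      by (symmetry; apply is_derive_unique; exact HW1).
    replace (Derive (fun x => W2 x) e) with (- (delta13 e * g2 B) - B * (W1 e - W2 e))
      by (symmetry; apply is_derive_unique; exact HW2).
    unfold v1, v2, hf, payoff, Qm. fold P1 P2 W1 W2. fold (P1 e) (P2 e) (W1 e) (W2 e).
    ring.
Qed.

Lemma trans0 Q i j : trans Q i j 0 = match i, j with st1, st1 => 1 | st2, st2 => 1 | _, _ => 0 end.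
Proof.
  unfold trans. destruct (Req_EM_T _ 0); [destruct i, j; reflexivity|].
  rewrite Rmult_0_r, Ropp_0, exp_0. destruct i, j; field; auto.
Qed.

Lemma Psi0 g1 g2 Q i A B : Psi g1 g2 Q i A B 0 = 0.
Proof.
  unfold Psi. rewrite RInt_point. rewrite !trans0. destruct i; simpl; unfold zero; simpl; ring.
Qed.

Lemma trans_sum Q i t : trans Q i st1 t + trans Q i st2 t = 1.
Proof.
  unfold trans. destruct (Req_EM_T _ 0); destruct i; try ring. field; auto. field; auto.
Qed.

Lemma trans_nonneg Q i j t : admissible Q -> 0 <= t -> 0 <= trans Q i j t.
Proof.
  destruct Q as [a b]. unfold admissible. simpl. intros [Ha Hb] Ht.
  unfold trans. simpl. destruct (Req_EM_T (a + b) 0) as [e|n].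
  - destruct i, j; lra.
  - assert (HS : 0 < a + b) by lra.
    assert (E1 : exp (- ((a + b) * t)) <= 1).
    { rewrite <- exp_0. destruct (Req_dec t 0) as [->|].
      right; f_equal; ring. left; apply exp_increasing; nra. }
    assert (E0 : 0 < exp (- ((a + b) * t))) by apply exp_pos.
    assert (0 <= a / (a + b)) by (apply Rdiv_le_0_compat; lra).
    assert (0 <= b / (a + b)) by (apply Rdiv_le_0_compat; lra).
    destruct i, j; nra.
Qed.

Lemma Wdiff G1 G2 A B e : 0 < A + B ->
  Wv G1 G2 A B st2 e - Wv G1 G2 A B st1 e = (G2 - G1) * Dk (A + B) e.
Proof. intros. unfold Wv, Ck. field. lra. Qed.

Definition dPsi g1 g2 Q i A B x :=
  trans Q i st1 x * v1 g1 g2 Q A B x + trans Q i st2 x * v2 g1 g2 Q A B x.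

Lemma Psi_le g1 g2 Q i A B eps c : admissible Q -> 0 < A + B -> 0 < eps ->
  (forall x, 0 < x < eps -> dPsi g1 g2 Q i A B x <= c) -> Psi g1 g2 Q i A B eps <= c * eps.
Proof.
  intros HQ HS He Hd.
  destruct (MVT_cor2 (Psi g1 g2 Q i A B) (dPsi g1 g2 Q i A B) 0 eps He) as [x [Hx1 Hx2]].
  { intros x _. apply is_derive_Reals. apply Psi_derive; auto. }
  rewrite Psi0 in Hx1. specialize (Hd x Hx2). nra.
Qed.

Lemma Psi_gt g1 g2 Q i A B eps : admissible Q -> 0 < A + B -> 0 < eps ->
  (forall x, 0 < x < eps -> 0 < dPsi g1 g2 Q i A B x) -> 0 < Psi g1 g2 Q i A B eps.
Proof.
  intros HQ HS He Hd.
  destruct (MVT_cor2 (Psi g1 g2 Q i A B) (dPsi g1 g2 Q i A B) 0 eps He) as [x [Hx1 Hx2]].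
  { intros x _. apply is_derive_Reals. apply Psi_derive; auto. }
  rewrite Psi0 in Hx1. specialize (Hd x Hx2). nra.
Qed.

Lemma v_cont1 g1 g2 Q A B x : 0 < A + B -> continuous (v1 g1 g2 Q A B) x.
Proof.
  intros HS. apply (@ex_derive_continuous R_AbsRing R_NormedModule).
  unfold v1, Wv, Bs, Dk, Ck, delta13. auto_derive. repeat split; lra.
Qed.

Lemma v_cont2 g1 g2 Q A B x : 0 < A + B -> continuous (v2 g1 g2 Q A B) x.
Proof.
  intros HS. apply (@ex_derive_continuous R_AbsRing R_NormedModule).
  unfold v2, Wv, Bs, Dk, Ck, delta13. auto_derive. repeat split; lra.
Qed.

Lemma dPsi_le g1 g2 Q i A B x c : admissible Q -> 0 <= x ->
  v1 g1 g2 Q A B x <= c -> v2 g1 g2 Q A B x <= c -> dPsi g1 g2 Q i A B x <= c.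
Proof.
  intros HQ Hx H1 H2. unfold dPsi.
  pose proof (trans_sum Q i x). pose proof (trans_nonneg Q i st1 x HQ Hx).
  pose proof (trans_nonneg Q i st2 x HQ Hx). nra.
Qed.

Lemma v1_0 g1 g2 Q A B : 0 < A + B ->
  v1 g1 g2 Q A B 0 = (g1 (ga Q) - g1 A) + (ga Q - A) * ((g2 B - g1 A) * (/ 2 / (1 + (A + B)) + / 2 / (2 + (A + B)))).
Proof.
  intros HS. unfold v1. rewrite Wdiff by auto. unfold Dk, delta13.
  rewrite Rmult_0_r, !Ropp_0, exp_0. field. lra.
Qed.

Lemma v2_0 g1 g2 Q A B : 0 < A + B ->
  v2 g1 g2 Q A B 0 = (g2 (gb Q) - g2 B) - (gb Q - B) * ((g2 B - g1 A) * (/ 2 / (1 + (A + B)) + / 2 / (2 + (A + B)))).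
Proof.
  intros HS. unfold v2. rewrite Wdiff by auto. unfold Dk, delta13.
  rewrite Rmult_0_r, !Ropp_0, exp_0. field. lra.
Qed.

Lemma g2_713 : g2_13 (7 / 12) = 263 / 144.
Proof. unfold g2_13. destruct (Rlt_dec (7/12) (7/12)); [lra|]. simpl. field. Qed.

Lemma g2_lt b : b < 7 / 12 -> g2_13 b = 193 / 144 + 5 / 6 * b.
Proof. intros. unfold g2_13. destruct (Rlt_dec b (7/12)); [reflexivity|lra]. Qed.

Lemma g2_bound b : g2_13 b <= 193 / 144 + 5 / 6 * b.
Proof. unfold g2_13. destruct (Rlt_dec b (7/12)); [lra|]. simpl. nra. Qed.

Lemma delta_pos x : 0 < delta13 x.
Proof. unfold delta13. pose proof (exp_pos (- x)). pose proof (exp_pos (- (2 * x))). lra. Qed.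

Lemma exp2_lt x : 0 < x -> exp (- (2 * x)) < exp (- x).
Proof. intros. apply exp_increasing. lra. Qed.

Lemma adm_Q (a b : R) : 0 <= a -> 0 <= b -> admissible (mkGen a b).
Proof. intros; split; simpl; auto. Qed.

Lemma part_weak : weak_equilibrium delta13 g1_13 g2_13 (mkGen (5 / 12) (7 / 12)).
Proof.
  split; [apply adm_Q; lra|].
  intros Q i HQ eta Heta.
  assert (HS : 0 < 5 / 12 + 7 / 12) by lra.
  destruct (cont_lt _ 0 eta (v_cont1 g1_13 g2_13 Q (5/12) (7/12) 0 HS) Heta) as [e1 [He1 H1]].
  destruct (cont_lt _ 0 eta (v_cont2 g1_13 g2_13 Q (5/12) (7/12) 0 HS) Heta) as [e2 [He2 H2]].
  assert (V1 : v1 g1_13 g2_13 Q (5/12) (7/12) 0 <= 0).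
  { rewrite v1_0 by auto. rewrite g2_713. unfold g1_13.
    replace (5 / 12 + 7 / 12) with 1 by field. simpl.
    replace (- (ga Q * (ga Q * 1)) - - (5 / 12 * (5 / 12 * 1)) +
      (ga Q - 5 / 12) * ((263 / 144 - - (5 / 12 * (5 / 12 * 1))) * (/ 2 / (1 + 1) + / 2 / (2 + 1))))
      with (- ((ga Q - 5/12) * (ga Q - 5/12))) by field.
    pose proof (Rle_0_sqr (ga Q - 5/12)). unfold Rsqr in *. lra. }
  assert (V2 : v2 g1_13 g2_13 Q (5/12) (7/12) 0 <= 0).
  { rewrite v2_0 by auto. rewrite g2_713. unfold g1_13.
    replace (5 / 12 + 7 / 12) with 1 by field. simpl.
    pose proof (g2_bound (gb Q)). lra. }
  exists (Rmin e1 e2). split; [apply Rmin_glb_lt; auto|].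
  intros eps [Hep Hee].
  assert (HP : Psi g1_13 g2_13 Q i (5/12) (7/12) eps <= eta * eps).
  { apply Psi_le; auto. intros x Hx.
    assert (Hxa : Rabs (x - 0) < e1 /\ Rabs (x - 0) < e2).
    { rewrite Rminus_0_r, Rabs_pos_eq by lra.
      pose proof (Rmin_l e1 e2). pose proof (Rmin_r e1 e2). lra. }
    apply dPsi_le; auto; [lra| |].
    - specialize (H1 x (proj1 Hxa)). lra.
    - specialize (H2 x (proj2 Hxa)). lra. }
  pose proof (Fconcat_eq g1_13 g2_13 Q i (5/12) (7/12) eps HQ HS) as HF.
  replace ((F delta13 g1_13 g2_13 i {| ga := 5 / 12; gb := 7 / 12 |} -
     Fconcat delta13 g1_13 g2_13 i Q eps {| ga := 5 / 12; gb := 7 / 12 |}) / eps)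
    with (- (Psi g1_13 g2_13 Q i (5/12) (7/12) eps * / eps)) by (rewrite <- HF; field; lra).
  assert (Psi g1_13 g2_13 Q i (5/12) (7/12) eps * / eps <= eta).
  { apply Rmult_le_reg_r with eps; [lra|]. rewrite Rmult_assoc, Rinv_l by lra. lra. }
  lra.
Qed.

Lemma part_ic b eps : 0 <= b < 7 / 12 -> 0 < eps ->
  F delta13 g1_13 g2_13 st2 (mkGen (5 / 12) (7 / 12))
  < Fconcat delta13 g1_13 g2_13 st2 (mkGen (5 / 12) b) eps (mkGen (5 / 12) (7 / 12)).
Proof.
  intros Hb He.
  assert (HS : 0 < 5 / 12 + 7 / 12) by lra.
  assert (HQ : admissible (mkGen (5/12) b)) by (apply adm_Q; lra).
  pose proof (Fconcat_eq g1_13 g2_13 (mkGen (5/12) b) st2 (5/12) (7/12) eps HQ HS) as HF.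
  cut (0 < Psi g1_13 g2_13 (mkGen (5/12) b) st2 (5/12) (7/12) eps); [lra|].
  apply Psi_gt; auto. intros x Hx. unfold dPsi.
  replace (v1 g1_13 g2_13 {| ga := 5 / 12; gb := b |} (5 / 12) (7 / 12) x) with 0
    by (unfold v1; simpl; ring).
  assert (Hv2 : 0 < v2 g1_13 g2_13 {| ga := 5 / 12; gb := b |} (5 / 12) (7 / 12) x).
  { unfold v2. rewrite Wdiff by auto. simpl. rewrite g2_lt by lra. rewrite g2_713.
    unfold g1_13, Dk, delta13. simpl.
    match goal with |- 0 < ?L => replace L with ((b - 7/12) * / 12 * (exp (- (2 * x)) - exp (- x))) by field end.
    pose proof (exp2_lt x (proj1 Hx)). nra. }
  assert (HP : 0 < trans {| ga := 5 / 12; gb := b |} st2 st2 x).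
  { unfold trans. simpl. destruct (Req_EM_T (5/12 + b) 0); [lra|].
    assert (0 < 5/12 / (5/12 + b)) by (apply Rdiv_lt_0_compat; lra).
    assert (0 <= b / (5/12 + b)) by (apply Rdiv_le_0_compat; lra).
    pose proof (exp_pos (- ((5 / 12 + b) * x))). nra. }
  nra.
Qed.

Definition pp (a : R) : R := 2 * a * a * a + 9 * a * a + (8 - 386 / 144) * a - 579 / 144.

Lemma pp_id a : 0 <= a ->
  pp a = (2 * a - / 2 * (/ (1 + a) + / (2 + a)) * (a ^ 2 + 193 / 144)) * (2 * (1 + a) * (2 + a)).
Proof. intros. unfold pp. field. lra. Qed.

Lemma pp_diff a c : pp a - pp c = (a - c) * (2 * (a * a + a * c + c * c) + 9 * (a + c) + (8 - 386 / 144)).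
Proof. unfold pp. ring. Qed.

Lemma eqn_iff a : 0 <= a ->
  (2 * a = / 2 * (/ (1 + a) + / (2 + a)) * (a ^ 2 + 193 / 144) <-> pp a = 0).
Proof.
  intros Ha. rewrite pp_id by auto. split.
  - intros ->. ring.
  - intros H. apply Rmult_integral in H. destruct H as [H|H]; [lra|].
    exfalso. assert (0 < 2 * (1 + a) * (2 + a)) by (apply Rmult_lt_0_compat; lra). lra.
Qed.

Lemma pp_inc a c : 0 <= a -> 0 <= c -> a < c -> pp a < pp c.
Proof.
  intros. assert (pp c - pp a > 0).
  { rewrite pp_diff. apply Rmult_lt_0_compat; [lra|]. nra. }
  lra.
Qed.

Lemma key_ineq z x : 0 < z -> 5 / 6 <= 2 * z ->
  2 * z = / 2 * (/ (1 + z) + / (2 + z)) * (z ^ 2 + 193 / 144) -> 0 <= x ->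
  5 / 6 * delta13 x <= (g2_13 0 - g1_13 z) * Dk (z + 0) x.
Proof.
  intros Hz Hz2 Heq Hx.
  rewrite g2_lt by lra. unfold g1_13, Dk, delta13.
  set (X := exp (- x)). set (Y := exp (- (2 * x))).
  assert (HY : 0 < Y) by apply exp_pos.
  assert (HXY : Y <= X).
  { unfold X, Y. destruct (Req_dec x 0) as [->|]. right; f_equal; ring. left; apply exp2_lt; lra. }
  set (u := (z ^ 2 + 193 / 144) / (2 * (1 + z))).
  set (w := (z ^ 2 + 193 / 144) / (2 * (2 + z))).
  assert (Huw : u + w = 2 * z) by (rewrite Heq; unfold u, w; field; lra).
  assert (Hw0 : 0 <= w) by (unfold w; apply Rdiv_le_0_compat; [nra|lra]).
  assert (Hwu : w <= u).
  { unfold u, w. unfold Rdiv. apply Rmult_le_compat_l; [nra|].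
    apply Rinv_le_contravar; lra. }
  replace ((193 / 144 + 5 / 6 * 0 - - z ^ 2) *
     (/ 2 * X / (1 + (z + 0)) + / 2 * Y / (2 + (z + 0)))) with (u * X + w * Y)
    by (unfold u, w; field; lra).
  destruct (Rle_dec w (5/12)); nra.
Qed.

Lemma part_strong z : 0 < z -> 5 / 6 <= 2 * z ->
  2 * z = / 2 * (/ (1 + z) + / (2 + z)) * (z ^ 2 + 193 / 144) ->
  strong_equilibrium delta13 g1_13 g2_13 (mkGen z 0).
Proof.
  intros Hz Hz2 Heq. split; [apply adm_Q; lra|].
  intros Q i HQ.
  assert (HS : 0 < z + 0) by lra.
  assert (V2 : forall x, 0 <= x -> v2 g1_13 g2_13 Q z 0 x <= 0).
  { intros x Hx. unfold v2. rewrite Wdiff by auto.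
    pose proof (key_ineq z x Hz Hz2 Heq Hx).
    pose proof (g2_bound (gb Q)). rewrite (g2_lt 0) in * by lra.
    pose proof (delta_pos x). destruct HQ as [_ Hb].
    set (K := (g2_13 0 - g1_13 z) * Dk (z + 0) x) in *.
    nra. }
  assert (HV1 : exists e, 0 < e /\ forall x, 0 <= x < e -> v1 g1_13 g2_13 Q z 0 x <= 0).
  { destruct (Req_dec (ga Q) z) as [Ea|Ea].
    - exists 1. split; [lra|]. intros x _. unfold v1. rewrite Ea. right. ring.
    - assert (Hpos : 0 < (ga Q - z) * (ga Q - z)).
      { assert (ga Q - z <> 0) by lra. pose proof (Rsqr_pos_lt _ H). unfold Rsqr in *. lra. }
      destruct (cont_lt _ 0 _ (v_cont1 g1_13 g2_13 Q z 0 0 HS) Hpos) as [e1 [He1 H1]].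
      exists e1. split; auto. intros x Hx.
      assert (Rabs (x - 0) < e1) by (rewrite Rminus_0_r, Rabs_pos_eq; lra).
      specialize (H1 x H). set (V := v1 g1_13 g2_13 Q z 0 x) in H1 |- *. rewrite v1_0 in H1 by auto.
      rewrite g2_lt in H1 by lra. unfold g1_13 in H1.
      replace ((193 / 144 + 5 / 6 * 0 - - z ^ 2) * (/ 2 / (1 + (z + 0)) + / 2 / (2 + (z + 0))))
        with (2 * z) in H1 by (rewrite Heq; field; lra).
      simpl in H1. match type of H1 with _ < ?R => assert (R = 0) by ring end. lra. }
  destruct HV1 as [e [He HV1]].
  exists e. split; auto. intros e' [He' He'e].
  pose proof (Fconcat_eq g1_13 g2_13 Q i z 0 e' HQ HS) as HF.
  assert (Psi g1_13 g2_13 Q i z 0 e' <= 0 * e').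
  { apply Psi_le; auto. intros x Hx. apply dPsi_le; auto; [lra| |].
    - apply HV1; lra.
    - apply V2; lra. }
  lra.
Qed.

Lemma pp_cont : continuity pp.
Proof.
  intro x. apply continuity_pt_filterlim.
  apply (@ex_derive_continuous R_AbsRing R_NormedModule). unfold pp. auto_derive. easy.
Qed.

Theorem mainTheorem13 :
  (* (i) *)
  (weak_equilibrium delta13 g1_13 g2_13 (mkGen (5 / 12) (7 / 12))
   /\ ~ strong_equilibrium delta13 g1_13 g2_13 (mkGen (5 / 12) (7 / 12))
   /\ (forall b : R, 0 <= b < 7 / 12 ->
         exists e0, 0 < e0 /\ forall eps, 0 < eps < e0 ->
           F delta13 g1_13 g2_13 st2 (mkGen (5 / 12) (7 / 12))
           < Fconcat delta13 g1_13 g2_13 st2 (mkGen (5 / 12) b) eps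
               (mkGen (5 / 12) (7 / 12))))
  /\
  (* (ii) *)
  (exists abar : R,
     (0 <= abar /\
      2 * abar = / 2 * (/ (1 + abar) + / (2 + abar)) * (abar ^ 2 + 193 / 144))
     /\ (forall a : R, 0 <= a ->
           2 * a = / 2 * (/ (1 + a) + / (2 + a)) * (a ^ 2 + 193 / 144) ->
           a = abar)
     /\ 2 * abar >= 5 / 6
     /\ strong_equilibrium delta13 g1_13 g2_13 (mkGen abar 0)).
Proof.
  split; [split; [|split]|].
  - apply part_weak.
  - intros [_ H]. destruct (H (mkGen (5/12) 0) st2 (adm_Q (5/12) 0 ltac:(lra) ltac:(lra))) as [e [He H']].
    specialize (H' e (conj He (Rle_refl e))).
    pose proof (part_ic 0 e ltac:(lra) He). lra.
  - intros b Hb. exists 1. split; [lra|]. intros eps [He _]. apply part_ic; auto.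
  - assert (H0 : pp 0 < 0) by (unfold pp; lra).
    assert (H1 : 0 < pp 1) by (unfold pp; lra).
    destruct (IVT pp 0 1 pp_cont ltac:(lra) H0 H1) as [z [Hz Hpz]].
    assert (Hz0 : 0 < z) by (destruct (Req_dec z 0) as [->|]; lra).
    assert (Hz5 : 5 / 12 <= z).
    { destruct (Rle_dec (5/12) z) as [|Hn]; auto. exfalso.
      assert (pp z < pp (5/12)) by (apply pp_inc; lra).
      unfold pp in H at 2. lra. }
    assert (Heq : 2 * z = / 2 * (/ (1 + z) + / (2 + z)) * (z ^ 2 + 193 / 144))
      by (apply eqn_iff; [lra|auto]).
    exists z. split; [split; [lra|exact Heq]|]. split; [|split].
    + intros a Ha Hea. apply eqn_iff in Hea; auto.
      destruct (Rtotal_order a z) as [Hl|[Hl|Hl]]; auto.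
      * pose proof (pp_inc a z Ha ltac:(lra) Hl). lra.
      * pose proof (pp_inc z a ltac:(lra) Ha Hl). lra.
    + lra.
    + apply part_strong; auto. lra.
Qed.
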